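(* Let $\mathfrak{S}=(S,\to,;)$ be an implication semigroup containing an element $0$ such that for all $a\in S$ we have $0\le a$ and $0;a=a;0=0$. If $\mathfrak{S}$ is representable via some representation $h$, then there exists a representation $h'$ of $\mathfrak{S}$ with $h'(0)=\emptyset$. Moreover, if $h$ is defined over a finite base, so is $h'$.
   Context: An implication algebra is a pair $(A,\to)$ with $\to$ a binary operation satisfying, for all $a,b,c$: $(a\to b)\to a=a$; $(a\to b)\to b=(b\to a)\to a$; $a\to(b\to c)=b\to(a\to c)$. In it, $1:=a\to a$ does not depend on $a$, and $a\le b$ iff $a\to b=1$ is a partial order. An implication semigroup is $(S,\to,;)$ with $(S,\to)$ an implication algebra, $(S,;)$ a semigroup, and for all $a,b,c$: $((a\to b)\to b);c=(a;c\to b;c)\to b;c$ and $c;((a\to b)\to b)=(c;a\to c;b)\to c;b$. For a transitive relation $\top\subseteq X\times X$, $\mathfrak{S}(\top)=(\wp(\top),\to,;)$ with $a\to b=(\top\setminus a)\cup b$ and $;$ relational composition. A representation of $\mathfrak{S}$ is an embedding (injective map preserving $\to$ and $;$) $h:\mathfrak{S}\to\mathfrak{S}(\top)$ for some transitive $\top\subseteq X\times X$; $X$ is its base. *)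

(* Defs.v *)
From Stdlib Require Import List.

Definition implication_algebra (S : Type) (imp : S -> S -> S) : Prop :=
  (forall a b, imp (imp a b) a = a) /\
  (forall a b, imp (imp a b) b = imp (imp b a) a) /\
  (forall a b c, imp a (imp b c) = imp b (imp a c)).

(* The top element 1 := a -> a (independent of a in an implication algebra)
   and the induced order a <= b iff a -> b = 1. *)
Definition ia_le {S : Type} (imp : S -> S -> S) (a b : S) : Prop :=
  imp a b = imp a a.

Definition implication_semigroup (S : Type) (imp comp : S -> S -> S) : Prop :=
  implication_algebra S imp /\
  (forall a b c, comp a (comp b c) = comp (comp a b) c) /\
  (forall a b c, comp (imp (imp a b) b) c = imp (imp (comp a c) (comp b c)) (comp b c)) /\
  (forall a b c, comp c (imp (imp a b) b) = imp (imp (comp c a) (comp c b)) (comp c b)).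

Definition rel (X : Type) := X -> X -> Prop.

Definition transitive_rel {X : Type} (T : rel X) : Prop :=
  forall x y z, T x y -> T y z -> T x z.

Definition representation {S : Type} (imp comp : S -> S -> S)
  {X : Type} (T : rel X) (h : S -> rel X) : Prop :=
  transitive_rel T /\
  (forall a x y, h a x y -> T x y) /\
  (forall a b x y, h (imp a b) x y <-> ((T x y /\ ~ h a x y) \/ h b x y)) /\
  (forall a b x y, h (comp a b) x y <-> exists z, h a x z /\ h b z y) /\
  (forall a b, (forall x y, h a x y <-> h b x y) -> a = b).

Definition finite_type (X : Type) : Prop := exists l : list X, forall x, In x l.

(* Main.v *)
Require Import Defs.
From Stdlib Require Import List Classical.

Theorem lemma5 (S : Type) (imp comp : S -> S -> S) (zero : S)
  (HS : implication_semigroup S imp comp)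
  (Hle0 : forall a, ia_le imp zero a)
  (Hl0 : forall a, comp zero a = zero)
  (Hr0 : forall a, comp a zero = zero)
  (X : Type) (T : rel X) (h : S -> rel X)
  (Hh : representation imp comp T h) :
  exists (X' : Type) (T' : rel X') (h' : S -> rel X'),
    representation imp comp T' h' /\
    (forall x y, ~ h' zero x y) /\
    (finite_type X -> finite_type X').
Proof.
  destruct Hh as [Htr [Hsub [Himp [Hcomp Hinj]]]].
  set (Z := h zero).
  set (one := imp zero zero).
  assert (Hone : forall x y, T x y -> h one x y).
  { intros x y Hxy. unfold one. apply Himp.
    destruct (classic (h zero x y)); [right | left]; auto. }
  assert (HZa : forall a x y, Z x y -> h a x y).
  { intros a x y Hz. assert (H1 : h (imp zero a) x y).
    { rewrite (Hle0 a). apply Himp. right. exact Hz. }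
    apply Himp in H1. destruct H1 as [[_ Hn] | H]; [contradiction | exact H]. }
  assert (HZT : forall x z y, Z x z -> T z y -> Z x y).
  { intros x z y Hz Ht. unfold Z. rewrite <- (Hl0 one). apply Hcomp.
    exists z. split; [exact Hz | apply Hone; exact Ht]. }
  assert (HTZ : forall x z y, T x z -> Z z y -> Z x y).
  { intros x z y Ht Hz. unfold Z. rewrite <- (Hr0 one). apply Hcomp.
    exists z. split; [apply Hone; exact Ht | exact Hz]. }
  set (cond := fun (P Q : X * X) =>
     fst P = fst Q /\ ~ Z (fst P) (snd Q) /\ (fst P = snd P \/ T (fst P) (snd P))).
  exists (X * X)%type.
  exists (fun P Q => cond P Q /\ T (snd P) (snd Q)).
  exists (fun a P Q => cond P Q /\ h a (snd P) (snd Q)).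
  subst cond. split; [|split].
  - split; [|split; [|split; [|split]]].
    + intros [s p] [s' q] [s'' r] [[E1 [N1 D1]] T1] [[E2 [N2 D2]] T2].
      simpl in *. split; [|eauto].
      split; [congruence|]. split; [subst; exact N2|exact D1].
    + intros a P Q [C H]. split; [exact C| eauto].
    + intros a b P Q. split.
      * intros [C H]. apply Himp in H. destruct H as [[Ht Hn] | H].
        -- left. split; [split; assumption|]. intros [_ H']. contradiction.
        -- right. split; assumption.
      * intros [[[C Ht] Hn] | [C H]]; split; try assumption; apply Himp.
        -- left. split; [exact Ht|]. intro H. apply Hn. split; assumption.
        -- right; exact H.
    + intros a b [s p] [s' r]. split.
      * intros [[E [N D]] H]. simpl in *. apply Hcomp in H. destruct H as [q [Ha Hb]].
        exists (s, q). simpl. split.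
        -- split; [|exact Ha]. split; [reflexivity|]. split; [|exact D].
           intro Hz. apply N. eapply HZT; [exact Hz| eauto].
        -- split; [|exact Hb]. split; [exact E|]. split; [exact N|].
           right. destruct D as [D|D]; [subst; eauto|eauto].
      * intros [[s1 q] [[[E1 [N1 D1]] Ha] [[E2 [N2 D2]] Hb]]]. simpl in *.
        split.
        -- split; [congruence|]. split; [subst; exact N2| exact D1].
        -- apply Hcomp. exists q. split; assumption.
    + intros a b Hab. apply Hinj. intros x y.
      destruct (classic (Z x y)) as [Hz|Hz].
      * split; intros _; apply HZa; exact Hz.
      * split; intro H.
        -- apply (proj1 (Hab (x,x) (x,y))). simpl.
           split; [split; [reflexivity|split; [exact Hz|left; reflexivity]]|exact H].
        -- apply (proj2 (Hab (x,x) (x,y))). simpl.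
           split; [split; [reflexivity|split; [exact Hz|left; reflexivity]]|exact H].
  - intros [s p] [s' q] [[E [N D]] H]. simpl in *. apply N.
    destruct D as [D|D].
    + subst. exact H.
    + eapply HTZ; [exact D| exact H].
  - intros [l Hl]. exists (list_prod l l). intros [x y]. apply in_prod; auto.
Qed.
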